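(* Let $N\ge2$, $r>0$ and $0<\alpha\le r^{-1}$. Then \[ \int_0^r t(1-\alpha t)^{N-1}\,dt\ \le\ \frac{N}{N+1}\left(\int_0^r(1-\alpha t)^{N-1}\,dt\right)^2, \] with equality if and only if $\alpha=r^{-1}$. *)

(* Defs.v *)
From Stdlib Require Import Reals.
From Coquelicot Require Import Coquelicot.

(* Main.v *)
Require Import Defs.
From Stdlib Require Import Reals.
From Coquelicot Require Import Coquelicot.
From Stdlib Require Import Lra Lia.
Open Scope R_scope.

Lemma key_ineq (m : nat) (a : R) : 0 <= a < 1 ->
  a ^ (S (S m)) - 1 + INR (S (S m)) * (1 - a) > 0.
Proof.
  intros [H0 H1]. induction m as [|m IH].
  - simpl. nra.
  - assert (E : a ^ S (S (S m)) - 1 + INR (S (S (S m))) * (1 - a)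
       = a * (a ^ (S (S m)) - 1 + INR (S (S m)) * (1 - a)) + INR (S (S m)) * (1-a)^2).
    { rewrite (S_INR (S (S m))). simpl pow. ring. }
    rewrite E. pose proof (pos_INR (S (S m))).
    assert (INR (S (S m)) > 0) by (apply lt_0_INR; lia).
    assert (0 < (1-a)^2) by nra.
    nra.
Qed.

Lemma F0_der al n x : al <> 0 ->
  is_derive (fun t => -(1-al*t)^(S n)/(al * INR (S n))) x ((1-al*x)^n).
Proof.
intros. auto_derive. easy. change (match n with 0%nat => 1 | S _ => INR n + 1 end) with (INR (S n)).
replace (1 + - (al*x)) with (1-al*x) by ring.
field. split; auto. apply not_0_INR; lia.
Qed.

Lemma F1_der al n x : al <> 0 ->
  is_derive (fun t => -t*(1-al*t)^(S n)/(al * INR (S n)) - (1-al*t)^(S (S n))/(al^2*INR (S n) * INR (S (S n)))) x (x*(1-al*x)^n).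
Proof.
intros. auto_derive. easy. change (match n with 0%nat => 1 | S _ => INR n + 1 end) with (INR (S n)).
replace (1 + - (al*x)) with (1-al*x) by ring.
simpl. change (match n with 0%nat => 1 | S _ => INR n + 1 end) with (INR (S n)).
field. pose proof (pos_INR n). rewrite S_INR. repeat split; lra.
Qed.

Theorem lemma2p10 (N : nat) (r alpha : R) (hN : (2 <= N)%nat) (hr : 0 < r)
  (ha0 : 0 < alpha) (ha1 : alpha <= / r) :
  RInt (fun t => t * (1 - alpha * t) ^ (N - 1)) 0 r
    <= INR N / INR (N + 1) * (RInt (fun t => (1 - alpha * t) ^ (N - 1)) 0 r) ^ 2
  /\ (RInt (fun t => t * (1 - alpha * t) ^ (N - 1)) 0 r
        = INR N / INR (N + 1) * (RInt (fun t => (1 - alpha * t) ^ (N - 1)) 0 r) ^ 2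
      <-> alpha = / r).
Proof.
  destruct N as [|n]; [lia|].
  replace (S n - 1)%nat with n by lia.
  replace (S n + 1)%nat with (S (S n)) by lia.
  assert (Hal : alpha <> 0) by lra.
  assert (I0 : RInt (fun t => (1 - alpha * t) ^ n) 0 r =
     (-(1-alpha*r)^(S n)/(alpha * INR (S n))) - (-(1-alpha*0)^(S n)/(alpha * INR (S n)))).
  { apply is_RInt_unique.
    apply (is_RInt_derive (fun t => -(1-alpha*t)^(S n)/(alpha * INR (S n)))).
    - intros x _. now apply F0_der.
    - intros x _. apply (ex_derive_continuous (fun x => (1 - alpha * x) ^ n)).
      auto_derive. easy. }
  assert (I1 : RInt (fun t => t * (1 - alpha * t) ^ n) 0 r =
     (-r*(1-alpha*r)^(S n)/(alpha * INR (S n)) - (1-alpha*r)^(S (S n))/(alpha^2*INR (S n) * INR (S (S n))))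
   - (-0*(1-alpha*0)^(S n)/(alpha * INR (S n)) - (1-alpha*0)^(S (S n))/(alpha^2*INR (S n) * INR (S (S n))))).
  { apply is_RInt_unique.
    apply (is_RInt_derive (fun t => -t*(1-alpha*t)^(S n)/(alpha * INR (S n)) - (1-alpha*t)^(S (S n))/(alpha^2*INR (S n) * INR (S (S n))))).
    - intros x _. now apply F1_der.
    - intros x _. apply (ex_derive_continuous (fun x => x * (1 - alpha * x) ^ n)).
      auto_derive. easy. }
  rewrite I0, I1. clear I0 I1.
  replace (1 - alpha * 0) with 1 by ring. rewrite !pow1.
  assert (Har : alpha * r <= 1).
  { replace 1 with (/ r * r) by (field; lra). apply Rmult_le_compat_r; lra. }
  assert (Har0 : 0 < alpha * r) by nra.
  change ((1 - alpha*r)^(S (S n))) with ((1-alpha*r) * (1-alpha*r)^(S n)).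
  set (a := 1 - alpha * r).
  assert (Hr : r = (1 - a)/alpha) by (unfold a; field; auto).
  set (P := a ^ (S n)).
  assert (Ha : 0 <= a < 1) by (unfold a; lra).
  destruct n as [|m]; [lia|].
  pose proof (key_ineq m a Ha) as Hg.
  fold P in Hg.
  set (k := INR (S (S m))).
  assert (Hk2 : INR (S (S (S m))) = k + 1) by (unfold k; rewrite (S_INR (S (S m))); ring).
  rewrite Hk2.
  assert (Hk : k > 0) by (unfold k; apply lt_0_INR; lia).
  assert (HP : 0 <= P) by (unfold P; apply pow_le; lra).
  assert (HPdef : P = a ^ S (S m)) by reflexivity.
  fold k in Hg.
  clearbody P k a.
  subst r.
  match goal with |- ?X <= ?Y /\ _ =>
    assert (HD : Y - X = P * (P - 1 + k * (1 - a)) / (alpha^2 * k * (k+1)))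
      by (field; repeat split; lra) end.
  assert (Hden : 0 < alpha^2 * k * (k+1)) by (assert (0 < alpha^2) by (apply pow_lt; lra);
    apply Rmult_lt_0_compat; [apply Rmult_lt_0_compat|]; lra).
  assert (HDge : 0 <= P * (P - 1 + k * (1 - a)) / (alpha^2 * k * (k+1))).
  { apply Rdiv_le_0_compat; [apply Rmult_le_pos|]; lra. }
  split; [lra|].
  split.
  - intro Heq.
    assert (HD0 : P * (P - 1 + k * (1 - a)) = 0).
    { assert (P * (P - 1 + k * (1 - a)) / (alpha^2 * k * (k+1)) = 0) by lra.
      apply Rmult_integral in H. destruct H as [H|H]; [exact H|].
      apply Rinv_neq_0_compat in H; [contradiction|lra]. }
    apply Rmult_integral in HD0. destruct HD0 as [HP0|HP0]; [|lra].
    rewrite HPdef in HP0. assert (a = 0) by (destruct (Req_dec a 0) as [E|E]; [exact E|]; exfalso; exact (pow_nonzero a _ E HP0)). subst a.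
    field. lra.
  - intro Heq. rewrite Rinv_div in Heq.
    assert (Ha0 : a = 0).
    { apply (Rmult_eq_compat_r (1 - a)) in Heq.
      unfold Rdiv in Heq. rewrite Rmult_assoc, Rinv_l in Heq by lra. nra. }
    assert (P = 0) by (rewrite HPdef, Ha0; apply pow_i; lia).
    assert (P * (P - 1 + k * (1 - a)) / (alpha^2 * k * (k+1)) = 0)
      by (rewrite H; unfold Rdiv; ring).
    lra.
Qed.
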